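(* Let $d\ge404$ and $k$ an integer with $d/2+1<k\le2d/3$. Then for every $x\in(1,2]$ such that $f(x)\le k/(2k-d)^2$, $$\frac{(x+1)f'(x)}{k}<\big(1+\eta(x)\big)f(x).$$
   Context: $f(x)=\binom dk^{-1}\sum_{i=0}^{d-k}\binom ki\binom{d-k}{i}x^{k-i}$ and $\eta(x)=\dfrac{2k-d}{d-k+\sqrt{(d-k)^2+d(2k-d)f(x)}}$. *)

(* Defs.v *)
From Stdlib Require Import Reals.
From Coquelicot Require Import Coquelicot.
Open Scope R_scope.

Definition fpoly (d k : nat) (x : R) : R :=
  / Binomial.C d k *
  sum_f_R0 (fun i => Binomial.C k i * Binomial.C (d - k) i * x ^ (k - i)) (d - k).

Definition eta (d k : nat) (x : R) : R :=
  (2 * INR k - INR d) /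
  ((INR d - INR k) +
   sqrt ((INR d - INR k) ^ 2 + INR d * (2 * INR k - INR d) * fpoly d k x)).

(* Main.v *)
Require Import Defs.
From Stdlib Require Import Reals Lra Lia Psatz.
From Coquelicot Require Import Coquelicot.
From mathcomp Require ssreflect ssrfun ssrbool eqtype ssrnat fintype bigop binomial.
Open Scope R_scope.

Definition Cb (n j : nat) : R := INR (binomial.binomial n j).

Module NatB.
Import ssreflect ssrfun ssrbool eqtype ssrnat fintype bigop binomial.

Lemma factorial_fact n : factorial n = Factorial.fact n.
Proof. elim: n => [|n IH] //. rewrite factS IH. reflexivity. Qed.

Lemma L1 n j : (n < j)%coq_nat -> binomial n j = 0%N.
Proof. move=> /ltP h. exact: bin_small. Qed.

Lemma L2 n j : (j <= n)%coq_nat -> (binomial n j * (Factorial.fact j * Factorial.fact (n - j)%coq_nat))%coq_nat = Factorial.fact n.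
Proof. move=> /leP h. rewrite -!factorial_fact. exact: bin_fact. Qed.

Lemma L3 n j : ((S j) * binomial n (S j))%coq_nat = ((n - j) * binomial n j)%coq_nat.
Proof. exact: mul_bin_left. Qed.

Lemma L4 n j : (n * binomial (Nat.pred n) j)%coq_nat = ((n - j) * binomial n j)%coq_nat.
Proof. exact: mul_bin_down. Qed.

Lemma L5 n j : (j <= n)%coq_nat -> binomial n (n - j)%coq_nat = binomial n j.
Proof. move=> /leP h. exact: bin_sub. Qed.

Lemma L6 n j : (j <= n)%coq_nat -> (0 < binomial n j)%coq_nat.
Proof. move=> /leP h. apply/ltP. by rewrite bin_gt0. Qed.

Lemma L0 n : binomial n 0 = 1%N.
Proof. exact: bin0. Qed.

Lemma bridge (F : nat -> nat) n :
  INR (\sum_(i < n.+1) F i) = sum_f_R0 (fun i => INR (F i)) n.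
Proof.
elim: n => [|n IH].
  by rewrite big_ord_recr big_ord0 /=.
rewrite big_ord_recr /= plus_INR -IH. reflexivity.
Qed.

Lemma L7 a m : sum_f_R0 (fun i => Cb m i * Cb a i) m = Cb (a + m)%coq_nat m.
Proof.
rewrite /Cb -(Vandermonde a m m) (bridge (fun i => ('C(a,i) * 'C(m, m-i))%N)).
apply PartSum.sum_eq; intros i hi; move/leP: hi => hi.
rewrite mult_INR Rmult_comm. congr (_ * _). congr INR.
by rewrite bin_sub.
Qed.
End NatB.


Lemma Cb_fact n j : (j <= n)%nat ->
  Cb n j = INR (Factorial.fact n) / (INR (Factorial.fact j) * INR (Factorial.fact (n - j))).
Proof.
intros h. unfold Cb. rewrite <- (NatB.L2 n j h). rewrite !mult_INR.
field. split; apply INR_fact_neq_0.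
Qed.

Lemma C_Cb n j : (j <= n)%nat -> Binomial.C n j = Cb n j.
Proof. intros h. rewrite Cb_fact by exact h. reflexivity. Qed.

Lemma Cb_small n j : (n < j)%nat -> Cb n j = 0.
Proof. intros h. unfold Cb. rewrite NatB.L1 by exact h. reflexivity. Qed.

Lemma Cb_pos n j : (j <= n)%nat -> 0 < Cb n j.
Proof. intros h. unfold Cb. apply lt_0_INR. apply NatB.L6. exact h. Qed.

Lemma Cb_ge0 n j : 0 <= Cb n j.
Proof. unfold Cb. apply pos_INR. Qed.

Lemma Cb_n0 n : Cb n 0 = 1.
Proof. unfold Cb. rewrite NatB.L0. reflexivity. Qed.

Lemma sum_ext_zero (f : nat -> R) a N : (a <= N)%nat -> (forall j, (a < j)%nat -> f j = 0) ->
  sum_f_R0 f N = sum_f_R0 f a.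
Proof.
intros h hz. induction h as [|N h IH].
- reflexivity.
- simpl. rewrite IH. rewrite (hz (S N)) by lia. ring.
Qed.

Lemma binom_Cb a N t : (a <= N)%nat -> (1+t)^a = sum_f_R0 (fun j => Cb a j * t^j) N.
Proof.
intros h. rewrite (sum_ext_zero _ a N h).
2:{ intros j hj. rewrite Cb_small by exact hj. ring. }
rewrite Rplus_comm, binomial. apply PartSum.sum_eq. intros i hi.
rewrite C_Cb by exact hi. rewrite pow1. ring.
Qed.

Lemma sum_swap (F : nat -> nat -> R) M N :
  sum_f_R0 (fun i => sum_f_R0 (fun n => F i n) N) M =
  sum_f_R0 (fun n => sum_f_R0 (fun i => F i n) M) N.
Proof.
induction M as [|M IH].
- reflexivity.
- simpl. rewrite IH. rewrite <- sum_plus. reflexivity.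
Qed.

Lemma Cb_swap k i n : Cb k i * Cb (k - i) n = Cb k n * Cb (k - n) i.
Proof.
destruct (Compare_dec.le_lt_dec (i + n) k) as [h|h].
- rewrite !Cb_fact by lia.
  replace (k - i - n)%nat with (k - n - i)%nat by lia.
  replace (k - (k - i))%nat with i by lia.
  field. repeat split; apply INR_fact_neq_0.
- destruct (Compare_dec.le_lt_dec i k) as [h2|h2].
  + destruct (Compare_dec.le_lt_dec n k) as [h3|h3].
    * rewrite (Cb_small (k - i) n) by lia. rewrite (Cb_small (k-n) i) by lia. ring.
    * rewrite (Cb_small (k - i) n) by lia. rewrite (Cb_small k n) by lia. ring.
  + rewrite (Cb_small k i) by lia. rewrite (Cb_small (k-n) i) by lia. ring.
Qed.

Lemma coef_id d k n : (k <= d)%nat -> (n <= k)%nat ->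
  sum_f_R0 (fun i => Cb k i * Cb (d - k) i * Cb (k - i) n) (d - k) = Cb k n * Cb (d - n) (d - k).
Proof.
intros hk hn.
rewrite (PartSum.sum_eq _ (fun i => (Cb (d - k) i * Cb (k - n) i) * Cb k n)).
2:{ intros i _. replace (Cb k i * Cb (d-k) i * Cb (k-i) n) with (Cb (d-k) i * (Cb k i * Cb (k-i) n)) by ring. rewrite Cb_swap. ring. }
rewrite <- scal_sum. rewrite NatB.L7. replace (k - n + (d - k))%nat with (d - n)%nat by lia. ring.
Qed.

Definition bb d k n := Cb k n * Cb (d - n) (d - k) / Cb d k.
Definition psi d k t := sum_f_R0 (fun n => bb d k n * t^n) k.
Definition dpsi d k t := sum_f_R0 (fun n => bb d k n * (INR n * t^(pred n))) k.

Lemma fpoly_psi d k t : (k <= d)%nat -> (d - k <= k)%nat -> fpoly d k (1+t) = psi d k t.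
Proof.
intros hk hm. unfold fpoly, psi, bb.
rewrite (PartSum.sum_eq _ (fun i => sum_f_R0 (fun n => Cb k i * Cb (d-k) i * Cb (k-i) n * t^n) k)).
2:{ intros i hi. rewrite !C_Cb by lia. rewrite (binom_Cb (k - i) k t) by lia.
    rewrite scal_sum. apply PartSum.sum_eq. intros j _. ring. }
rewrite sum_swap. rewrite C_Cb by lia. rewrite scal_sum. apply PartSum.sum_eq. intros n hn.
rewrite <- (coef_id d k n hk hn).
rewrite <- (scal_sum (fun i => Cb k i * Cb (d - k) i * Cb (k - i) n) (d-k) (t^n)).
unfold Rdiv. ring.
Qed.

Lemma bb_ratio d k n : (k <= d)%nat -> (n <= k)%nat ->
  INR (S n) * bb d k (S n) * (INR d - INR n) = bb d k n * (INR k - INR n)^2.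
Proof.
intros hk hn. unfold bb.
assert (h1 : INR (S n) * Cb k (S n) = (INR k - INR n) * Cb k n).
{ unfold Cb. rewrite <- mult_INR, <- minus_INR by exact hn. rewrite <- mult_INR.
  f_equal. exact (NatB.L3 k n). }
assert (h2 : INR (d - n) * Cb (d - S n) (d - k) = (INR k - INR n) * Cb (d - n) (d - k)).
{ unfold Cb. rewrite <- mult_INR, <- minus_INR by exact hn. rewrite <- mult_INR.
  replace (d - S n)%nat with (Nat.pred (d - n)) by lia.
  replace (k - n)%nat with (d - n - (d - k))%nat by lia.
  f_equal. exact (NatB.L4 (d - n) (d - k)). }
rewrite minus_INR in h2 by lia.
unfold Rdiv.
replace (INR (S n) * (Cb k (S n) * Cb (d - S n) (d - k) * / Cb d k) * (INR d - INR n))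
  with ((INR (S n) * Cb k (S n)) * ((INR d - INR n) * Cb (d - S n) (d - k)) * / Cb d k) by ring.
rewrite h1, h2. ring.
Qed.

Lemma bb_0 d k : (k <= d)%nat -> bb d k 0 = 1.
Proof.
intros hk. unfold bb. rewrite Cb_n0. replace (d - 0)%nat with d by lia.
unfold Cb. rewrite NatB.L5 by exact hk. field. fold (Cb d k). apply Rgt_not_eq, Cb_pos. exact hk.
Qed.

Lemma bb_ge0 d k n : (k <= d)%nat -> 0 <= bb d k n.
Proof.
intros hk. unfold bb. apply Rmult_le_pos. apply Rmult_le_pos; apply Cb_ge0.
left. apply Rinv_0_lt_compat, Cb_pos, hk.
Qed.

Lemma bb_small d k : (k <= d)%nat -> bb d k (S k) = 0.
Proof. intros hk. unfold bb. rewrite (Cb_small k (S k)) by lia. unfold Rdiv. ring. Qed.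

Lemma sum_shift (g : nat -> R) N : sum_f_R0 g (S N) = g 0%nat + sum_f_R0 (fun j => g (S j)) N.
Proof.
induction N as [|N IH].
- simpl. ring.
- change (sum_f_R0 g (S (S N))) with (sum_f_R0 g (S N) + g (S (S N))).
  rewrite IH. simpl. ring.
Qed.

Lemma sum_shift' (g : nat -> R) N : (1 <= N)%nat -> sum_f_R0 g N = g 0%nat + sum_f_R0 (fun j => g (S j)) (pred N).
Proof. intros h. destruct N as [|N]. lia. apply sum_shift. Qed.

Lemma sum_ge_first (f : nat -> R) N : (forall j, (j <= N)%nat -> 0 <= f j) -> f 0%nat <= sum_f_R0 f N.
Proof.
induction N as [|N IH]; intros h.
- simpl. lra.
- simpl. assert (0 <= f (S N)) by (apply h; lia). assert (f 0%nat <= sum_f_R0 f N) by (apply IH; intros; apply h; lia). lra.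
Qed.

Lemma is_derive_poly (c : nat -> R) N t :
  is_derive (fun t => sum_f_R0 (fun n => c n * t^n) N) t (sum_f_R0 (fun n => c n * (INR n * t^(pred n))) N).
Proof.
induction N as [|N IH].
- simpl. auto_derive. auto. ring.
- simpl. apply (is_derive_plus (fun t => sum_f_R0 (fun n => c n * t^n) N) (fun t => c (S N) * t^(S N))).
  exact IH. auto_derive. auto. ring.
Qed.
Lemma quad (K D n : R) : D/2 + 1 < K -> K <= 2*D/3 -> 404 <= D -> 1 <= n -> n <= K ->
  0 < (K + K*(2*(2*K-D)-1)/(2*D) - n)*(D-n) - 2*(K-n)^2.
Proof.
intros.
set (c := K*(2*(2*K-D)-1)/(2*D)).
assert (hc : c*(2*D) = K*(2*(2*K-D)-1)) by (unfold c; field; lra).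
assert (q1 : 0 < (K + c - 1)*(D-1) - 2*(K-1)^2) by nra.
assert (qK : 0 < (K + c - K)*(D-K)) by nra.
assert (E: ((K + c - n)*(D-n) - 2*(K-n)^2)*(K-1) = ((K + c - 1)*(D-1) - 2*(K-1)^2)*(K-n) + ((K + c - K)*(D-K))*(n-1) + (n-1)*(K-n)*(K-1)) by ring.
assert (0 <= (n-1)*(K-n)*(K-1)) by (apply Rmult_le_pos; [apply Rmult_le_pos|]; lra).
nra.
Qed.
Lemma etab (K D f : R) : D/2 + 1 < K -> K <= 2*D/3 -> 404 <= D -> 1 <= f ->
  f <= K / (2*K - D)^2 ->
  (2*(2*K-D)-1)/(2*D) + 1/(2*D*f) <= (2*K-D) / ((D-K) + sqrt((D-K)^2 + D*(2*K-D)*f)).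
Proof.
intros h1 h2 h3 h4 h5.
set (S := 2*K-D). set (M := D-K).
assert (hS : 2 < S) by (unfold S; lra).
assert (hM : 0 < M) by (unfold M; lra).
assert (hX : 0 <= M^2 + D*S*f) by (apply Rplus_le_le_0_compat; [nra| apply Rmult_le_pos; nra]).
set (Q := sqrt (M^2 + D*S*f)).
assert (hQ : 0 <= Q) by apply sqrt_pos.
assert (hQ2 : Q*Q = M^2 + D*S*f) by (apply sqrt_sqrt; auto).
set (u := (f-1)/(2*f)).
assert (hu0 : 0 <= u) by (unfold u; apply Rmult_le_pos; [lra| left; apply Rinv_0_lt_compat; lra]).
assert (hfK : f * S^2 <= K).
{ unfold S in *. apply (Rmult_le_compat_r ((2*K-D)^2)) in h5; [|nra].
  rewrite Rmult_comm in h5. replace (K / (2 * K - D) ^ 2 * (2 * K - D) ^ 2) with K in h5 by (field; nra). nra. }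
assert (hS2K : S^2 <= K) by nra.
assert (hufu : u * (2*f) = f - 1) by (unfold u; field; lra).
set (Lb := (S - u)/D).
assert (hLb : (2*S-1)/(2*D) + 1/(2*D*f) = Lb) by (unfold Lb, u; field; lra).
fold S M. rewrite hLb.
assert (hu1 : u*(1+4*M) <= 2*M - 2*S^2 + 2*S).
{
  assert (hu : 2*u*K <= K - S^2).
  { assert (2*u*K*f = (f-1)*K) by nra. nra. }
  assert (hKM : K = M + S) by (unfold M, S; lra).
  nra. }
assert (hLbpos : 0 < Lb) by (unfold Lb; apply Rdiv_lt_0_compat; nra).
assert (hY : 0 <= S - Lb*M).
{ unfold Lb. apply Rmult_le_reg_r with D; [lra|].
  replace ((S - (S-u)/D*M)*D) with (S*D - (S-u)*M) by (field; lra). unfold M, S in *. nra. }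
assert (hsq : Lb^2 * (M^2 + D*S*f) <= (S - Lb*M)^2).
{
  assert (key : Lb^2*D*f <= S - 2*Lb*M).
  { unfold Lb. apply Rmult_le_reg_r with D; [lra|].
    replace ((S - u) / D) with ((S-u)*/D) by reflexivity.
    assert (hDi : D * / D = 1) by (field; lra).
    assert (hf : f*(1-2*u) = 1) by nra.
    replace (((S - u) * / D) ^ 2 * D * f * D) with ((S-u)^2*f) by (field; lra).
    replace ((S - 2 * ((S - u) * / D) * M) * D) with (S*D - 2*(S-u)*M) by (field; lra).
    assert (hD : D = S + 2*M) by (unfold S, M; lra).
    rewrite hD.
    (* (S-u)^2 f <= S^2 + 2 M u  with f(1-2u)=1 *)
    assert (h12 : 0 < 1 - 2*u) by nra.
    apply Rmult_le_reg_r with (1-2*u); [lra|].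
    replace ((S - u) ^ 2 * f * (1 - 2 * u)) with ((S-u)^2) by (rewrite Rmult_assoc, hf; ring).
    nra. }
  nra. }
assert (hLQ : Lb*Q <= S - Lb*M).
{ destruct (Rle_dec (Lb*Q) (S - Lb*M)) as [ok|no]; auto.
  exfalso. apply Rnot_le_lt in no. 
  assert ((S-Lb*M)^2 < (Lb*Q)^2) by nra.
  assert ((Lb*Q)^2 = Lb^2*(M^2+D*S*f)) by (rewrite <- hQ2; ring). nra. }
apply Rmult_le_reg_r with (M+Q); [lra|].
unfold Rdiv. rewrite Rmult_assoc, Rinv_l; [|lra]. nra.
Qed.

Lemma sum_lin (a : R) (f g h : nat -> R) N :
  sum_f_R0 (fun n => a * f n - g n - h n) N = a * sum_f_R0 f N - sum_f_R0 g N - sum_f_R0 h N.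
Proof. induction N as [|N IH]; simpl; [ring| rewrite IH; ring]. Qed.

Lemma P_pos d k t : (404 <= d)%nat ->
  INR d / 2 + 1 < INR k -> INR k <= 2 * INR d / 3 -> 0 < t ->
  0 < (INR k + INR k*(2*(2*INR k-INR d)-1)/(2*INR d)) * psi d k t + INR k/(2*INR d)
      - (2+t) * dpsi d k t.
Proof.
intros hd h1 h2 ht.
assert (hD : 404 <= INR d) by (replace 404 with (INR 404) by (simpl; ring); apply le_INR; exact hd).
assert (hkd : (k <= d)%nat) by (apply INR_le; lra).
assert (hk1 : (1 <= k)%nat) by (apply INR_le; simpl; lra).
set (K := INR k) in *. set (D := INR d) in *.
set (Kc := K + K*(2*(2*K-D)-1)/(2*D)).
set (g := fun n => bb d k n * (INR n * t^(pred n))).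
assert (hA : 2 * dpsi d k t = sum_f_R0 (fun n => 2 * (INR (S n) * bb d k (S n)) * t^n) k).
{ unfold dpsi. fold g.
  assert (e : sum_f_R0 g k = sum_f_R0 g (S k) - g (S k)) by (simpl; ring).
  assert (g0 : g 0%nat = 0) by (unfold g; simpl; ring).
  assert (gk : g (S k) = 0) by (unfold g; rewrite bb_small by exact hkd; ring).
  rewrite e, sum_shift, g0, gk.
  replace (2 * (0 + sum_f_R0 (fun j : nat => g (S j)) k - 0)) with (2 * sum_f_R0 (fun j : nat => g (S j)) k) by ring.
  rewrite scal_sum. apply PartSum.sum_eq. intros j _. unfold g. simpl (pred (S j)). ring. }
assert (hB : t * dpsi d k t = sum_f_R0 (fun n => INR n * bb d k n * t^n) k).
{ unfold dpsi. rewrite scal_sum. apply PartSum.sum_eq. intros j _. destruct j as [|j].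
  - simpl. ring.
  - simpl (pred (S j)). simpl (t ^ S j). ring. }
assert (hE : Kc * psi d k t + K/(2*D) - (2+t) * dpsi d k t =
   sum_f_R0 (fun n => (Kc * bb d k n - 2 * (INR (S n) * bb d k (S n)) - INR n * bb d k n) * t^n) k + K/(2*D)).
{ replace ((2+t) * dpsi d k t) with (2 * dpsi d k t + t * dpsi d k t) by ring.
  rewrite hA, hB.
  rewrite (PartSum.sum_eq (fun n => (Kc * bb d k n - 2 * (INR (S n) * bb d k (S n)) - INR n * bb d k n) * t^n) (fun n => Kc * (bb d k n * t^n) - 2 * (INR (S n) * bb d k (S n)) * t^n - INR n * bb d k n * t^n)).
  2:{ intros; ring. }
  rewrite sum_lin. unfold psi. ring. }
rewrite hE.
set (cf := fun n => (Kc * bb d k n - 2 * (INR (S n) * bb d k (S n)) - INR n * bb d k n)).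
fold cf.
assert (hb1 : bb d k 1 = K^2/D).
{ pose proof (bb_ratio d k 0 hkd ltac:(lia)) as r. rewrite bb_0 in r by exact hkd.
  simpl (INR 0) in r. simpl (INR 1) in r. fold K D in r. field_simplify_eq; [|lra]. nra. }
assert (hcf0 : cf 0%nat + K/(2*D) = 0).
{ unfold cf. rewrite bb_0 by exact hkd. simpl (INR 1). simpl (INR 0). rewrite hb1. unfold Kc. field. lra. }
assert (hcf : forall n, (1 <= n)%nat -> (n <= k)%nat -> cf n * (D - INR n) = bb d k n * ((Kc - INR n)*(D - INR n) - 2*(K - INR n)^2)).
{ intros n hn1 hnk. unfold cf. pose proof (bb_ratio d k n hkd hnk) as r. fold K D in r.
  replace ((Kc * bb d k n - 2 * (INR (S n) * bb d k (S n)) - INR n * bb d k n) * (D - INR n))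
    with (Kc * bb d k n * (D - INR n) - 2 * (INR (S n) * bb d k (S n) * (D - INR n)) - INR n * bb d k n * (D - INR n)) by ring.
  rewrite r. ring. }
assert (hnD : forall n, (n <= k)%nat -> INR n <= K) by (intros; apply le_INR; auto).
assert (hq : forall n, (1 <= n)%nat -> (n <= k)%nat -> 0 < (Kc - INR n)*(D - INR n) - 2*(K - INR n)^2).
{ intros n hn1 hnk. unfold Kc. apply quad; try lra. replace 1 with (INR 1) by reflexivity. apply le_INR; auto. auto. }
assert (hcfpos : forall n, (1 <= n)%nat -> (n <= k)%nat -> 0 <= cf n).
{ intros n hn1 hnk. pose proof (hcf n hn1 hnk). pose proof (hq n hn1 hnk). pose proof (hnD n hnk).
  pose proof (bb_ge0 d k n hkd).
  assert (0 < D - INR n) by lra.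
  assert (0 <= cf n * (D - INR n)) by (rewrite H; apply Rmult_le_pos; lra). nra. }
assert (hcf1 : 0 < cf 1%nat).
{ pose proof (hcf 1%nat (le_n 1) hk1). pose proof (hq 1%nat (le_n 1) hk1). pose proof (hnD 1%nat hk1).
  simpl (INR 1) in *. assert (0 < bb d k 1) by (rewrite hb1; apply Rdiv_lt_0_compat; nra).
  assert (0 < cf 1%nat * (D - 1)) by (rewrite H; apply Rmult_lt_0_compat; lra). nra. }
change (0 < sum_f_R0 (fun n => cf n * t^n) k + K/(2*D)).
rewrite (sum_shift' (fun n => cf n * t^n) k hk1). set (k' := pred k). simpl (t ^ 0).
assert (hs : cf 1%nat * t ^ 1 <= sum_f_R0 (fun j => cf (S j) * t ^ (S j)) k').
{ apply (sum_ge_first (fun j => cf (S j) * t ^ (S j))). intros j hj.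
  apply Rmult_le_pos. apply hcfpos; lia. apply pow_le. lra. }
simpl (t ^ 1) in hs. assert (0 < cf 1%nat * (t * 1)) by (apply Rmult_lt_0_compat; lra).
lra.
Qed.

Lemma psi_ge1 d k t : (k <= d)%nat -> 0 <= t -> 1 <= psi d k t.
Proof.
intros hk ht. unfold psi.
pose proof (sum_ge_first (fun n => bb d k n * t^n) k) as h.
simpl in h. rewrite bb_0 in h by exact hk. rewrite Rmult_1_r in h. apply h.
intros j _. apply Rmult_le_pos. apply bb_ge0; exact hk. apply pow_le; exact ht.
Qed.

Theorem lemma18 (d k : nat) :
  (404 <= d)%nat ->
  INR d / 2 + 1 < INR k -> INR k <= 2 * INR d / 3 ->
  forall x : R, 1 < x <= 2 ->
  fpoly d k x <= INR k / (2 * INR k - INR d) ^ 2 ->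
  (x + 1) * Derive (fpoly d k) x / INR k < (1 + eta d k x) * fpoly d k x.
Proof.
intros hd h1 h2 x hx hf.
assert (hD : 404 <= INR d) by (replace 404 with (INR 404) by (simpl; ring); apply le_INR; exact hd).
assert (hkd : (k <= d)%nat) by (apply INR_le; lra).
assert (hmk : (d - k <= k)%nat).
{ apply INR_le. rewrite minus_INR by exact hkd. lra. }
assert (fx : forall y, fpoly d k y = psi d k (y - 1)).
{ intros y. rewrite <- fpoly_psi by assumption. f_equal. ring. }
assert (hder : is_derive (fpoly d k) x (dpsi d k (x - 1))).
{ apply (is_derive_ext (fun y => psi d k (y - 1))). { intros; symmetry; apply fx. }
  pose proof (is_derive_poly (bb d k) k (x - 1)) as hp.
  assert (hg : is_derive (fun y : R => y - 1) x 1) by (auto_derive; auto; ring).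
  pose proof (is_derive_comp (fun t => psi d k t) (fun y => y - 1) x _ _ hp hg) as hc.
  unfold psi. simpl in hc. 
  replace (dpsi d k (x - 1)) with (scal 1 (sum_f_R0 (fun n : nat => bb d k n * (INR n * (x - 1) ^ Init.Nat.pred n)) k)).
  exact hc. unfold dpsi. unfold scal; simpl. unfold mult; simpl. ring. }
rewrite (is_derive_unique _ _ _ hder).
rewrite !fx.
unfold eta. rewrite fx.
set (t := x - 1).
assert (ht : 0 < t) by (unfold t; lra).
pose proof (P_pos d k t hd h1 h2 ht) as hP.
pose proof (psi_ge1 d k t hkd (Rlt_le _ _ ht)) as hf1.
rewrite fx in hf. fold t in hf.
pose proof (etab (INR k) (INR d) (psi d k t) h1 h2 hD hf1 hf) as he.
set (K := INR k) in *. set (D := INR d) in *.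
set (f := psi d k t) in *. set (f' := dpsi d k t) in *.
set (eta0 := (2 * K - D) / (D - K + sqrt ((D - K) ^ 2 + D * (2 * K - D) * f))) in *.
assert (hx1 : x + 1 = 2 + t) by (unfold t; ring).
rewrite hx1.
assert (hK : 0 < K) by lra.
assert (hLb : (2 * (2 * K - D) - 1) / (2 * D) * f + 1 / (2 * D) <= eta0 * f).
{ replace ((2 * (2 * K - D) - 1) / (2 * D) * f + 1 / (2 * D)) with
     (((2 * (2 * K - D) - 1) / (2 * D) + 1 / (2 * D * f)) * f) by (field; lra).
  apply Rmult_le_compat_r; lra. }
apply Rmult_lt_reg_r with K; [lra|].
unfold Rdiv. rewrite Rmult_assoc, Rinv_l, Rmult_1_r by lra.
assert (E : (K + K * (2 * (2 * K - D) - 1) / (2 * D)) * f + K / (2 * D) =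
            K * (f + ((2 * (2 * K - D) - 1) / (2 * D) * f + 1 / (2 * D)))) by (field; lra).
nra.
Qed.
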